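(* Assume in addition $L\ge\mu$. Consider any sequences generated by Algorithm 4, let $\sigma:=\hat\sigma+\sigma_u$, $x^*$ the unique minimizer of $h=f+g$, $d_0:=\|x^*-x^0\|$ and $\gamma:=\sqrt{\sigma_u/(1+\sigma_u)}$, $\rho:=1-\gamma\sqrt{\mu/L}$. Then: (a) for all $k\ge1$, $h(y^k)-h(x^* )\le\frac{Ld_0^2}{2\sigma_u}\rho^{k-1}$ and $\max\{\|x^*-y^k\|,\|x^*-x^k\|\}\le\sqrt{\frac{L}{\sigma_u\mu}}\,d_0\,\rho^{(k-1)/2}$; (b) for all $k\ge1$, $v^{k+1}\in\partial_{\varepsilon_{k+1}}f(y^{k+1})+\nabla g(y^{k+1})$, $\|v^{k+1}\|\le\frac{6d_0L^{3/2}}{\mu^{1/2}\sigma_u^{3/2}}\Big(1+\sigma\sqrt{1+\frac{\sigma_u\mu}{L}}\Big)\rho^{(k-1)/2}$, and $\varepsilon_{k+1}\le\frac{3\sigma^2d_0^2L^2}{\sigma_u^2\mu}\rho^{k-1}$.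
   Context: $\mathcal H$ is a finite-dimensional real inner product space with norm $\|\cdot\|$. $f,g:\mathcal H\to(-\infty,\infty]$ are proper, closed, convex, $h:=f+g$ has nonempty domain; $g$ is $\mu$-strongly convex ($\mu>0$). $\Omega\subseteq\mathcal H$ is a nonempty closed convex set containing $\mathrm{dom}\,f$, $P_\Omega$ is the orthogonal projection onto $\Omega$, and $g$ is differentiable on an open set containing $\Omega$ with $\|\nabla g(x)-\nabla g(y)\|\le L\|x-y\|$ for $x,y\in\Omega$, $L>0$. For $\varepsilon\ge0$, $\partial_\varepsilon f(y):=\{u: f(w)\ge f(y)+\langle u,w-y\rangle-\varepsilon\ \forall w\}$. Definition: for $\hat\sigma\ge0$, $(y,u,\varepsilon)\in\mathcal H\times\mathcal H\times[0,\infty)$ is a $\hat\sigma$-approximate PG solution at $(x,\lambda)\in\mathcal H\times(0,\infty)$ if, with $z:=P_\Omega(x)$, $u\in\partial_\varepsilon f(y)$ and $\frac{\|\lambda(u+\nabla g(z))+y-x\|^2}{1+\lambda\mu}+2\lambda\varepsilon\le\hat\sigma^2\|y-x\|^2$. Algorithm 4: Choose $x^0,y^0\in\mathcal H$, $\hat\sigma\ge0$, $0<\sigma_u\le1$ with $\sigma_u+\hat\sigma<1$; let $\lambda:=\frac{\sigma_u}{\sqrt{(\sigma_u\mu/2)^2+L^2}-\sigma_u\mu/2}$ and $A_0=0$. For $k=0,1,\dots$: set $a_{k+1}=\frac{(1+2\mu A_k)\lambda+\sqrt{(1+2\mu A_k)^2\lambda^2+4(1+\mu A_k)A_k\lambda}}{2}$,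 $\tilde x^k=\frac{a_{k+1}-\mu A_k\lambda}{A_k+a_{k+1}}x^k+\frac{A_k+\mu A_k\lambda}{A_k+a_{k+1}}y^k$, compute a $\hat\sigma$-approximate PG solution $(y^{k+1},u^{k+1},\varepsilon_{k+1})$ at $(\tilde x^k,\lambda)$, then set $A_{k+1}=A_k+a_{k+1}$, $v^{k+1}=u^{k+1}+\nabla g(y^{k+1})$, $x^{k+1}=\frac{1+\mu A_k}{1+\mu A_{k+1}}x^k+\frac{\mu a_{k+1}}{1+\mu A_{k+1}}y^{k+1}-\frac{a_{k+1}}{1+\mu A_{k+1}}v^{k+1}$. ''Sequences generated by Algorithm 4'' means any sequences satisfying these relations for all $k\ge0$. *)

(* Defs.v *)
(* H = 'rV[R]_n with the standard Euclidean inner product. *)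
From HB Require Import structures.
From mathcomp Require Import all_boot all_order all_algebra.
From mathcomp Require Import all_classical all_reals all_analysis.
Set Implicit Arguments. Unset Strict Implicit. Unset Printing Implicit Defensive.
Import Order.TTheory GRing.Theory Num.Theory.
Local Open Scope ring_scope.

Section Defs.
Context {R : realType} {n : nat}.
Local Notation V := 'rV[R]_n.

Definition ip (u v : V) : R := \sum_(i < n) u ord0 i * v ord0 i.
Definition nrm (u : V) : R := Num.sqrt (ip u u).

Definition proper_fn (f : V -> \bar R) : Prop :=
  (forall x, f x != -oo%E) /\ (exists x, (f x < +oo)%E).

Definition convex_fn (f : V -> \bar R) : Prop :=
  forall x y (t : R), 0 <= t <= 1 ->
    (f (t *: x + (1 - t) *: y)%R <= t%:E * f x + (1 - t)%:E * f y)%E.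

(* closed = lower semicontinuous *)
Definition lsc_fn (f : V -> \bar R) : Prop :=
  forall x (a : R), (a%:E < f x)%E ->
    exists2 d : R, 0 < d & forall y, nrm (y - x) < d -> (a%:E < f y)%E.

Definition dom (f : V -> \bar R) : set V := [set x | (f x < +oo)%E].

Definition strongly_convex_fn (mu : R) (g : V -> \bar R) : Prop :=
  forall x y (t : R), x \in dom g -> y \in dom g -> 0 <= t <= 1 ->
    (g (t *: x + (1 - t) *: y)%R <=
       t%:E * g x + (1 - t)%:E * g y - (mu / 2 * t * (1 - t) * nrm (x - y) ^+ 2)%:E)%E.

Definition closed_set (O : set V) : Prop :=
  forall x, (forall e : R, 0 < e -> exists2 y, O y & nrm (y - x) < e) -> O x.

Definition open_set (U : set V) : Prop :=
  forall x, U x -> exists2 r : R, 0 < r & forall y, nrm (y - x) < r -> U y.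

Definition cvx_set (O : set V) : Prop :=
  forall x y (t : R), O x -> O y -> 0 <= t <= 1 -> O (t *: x + (1 - t) *: y).

Definition is_proj (O : set V) (x z : V) : Prop :=
  O z /\ forall w, O w -> nrm (x - z) <= nrm (x - w).

Definition has_gradient (g : V -> \bar R) (x d : V) : Prop :=
  (exists2 r : R, 0 < r & forall y, nrm (y - x) < r -> g y \is a fin_num) /\
  forall e : R, 0 < e -> exists2 dl : R, 0 < dl & forall h, nrm h < dl ->
    `| fine (g (x + h)%R) - fine (g x) - ip d h | <= e * nrm h.

Definition eps_subdiff (f : V -> \bar R) (eps : R) (y u : V) : Prop :=
  forall w, (f y + (ip u (w - y))%:E - eps%:E <= f w)%E.

(* sigma-approximate PG solution (y,u,eps) at (x,lam);
   P = projection onto Omega, G = gradient of g *)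
Definition approx_PG (f : V -> \bar R) (G P : V -> V) (mu sig : R)
    (x : V) (lam : R) (y u : V) (eps : R) : Prop :=
  0 <= eps /\ eps_subdiff f eps y u /\
  nrm (lam *: (u + G (P x)) + y - x) ^+ 2 / (1 + lam * mu) + 2 * lam * eps
    <= sig ^+ 2 * nrm (y - x) ^+ 2.

End Defs.

(* Main.v *)
Require Import Defs.
From HB Require Import structures.
From mathcomp Require Import all_boot all_order all_algebra.
From mathcomp Require Import all_classical all_reals all_analysis.
Import Order.TTheory GRing.Theory Num.Theory.
Local Open Scope classical_set_scope.
Local Open Scope ring_scope.

From mathcomp Require Import ring lra.
Section L1.
Context {R : realType} {n : nat}.
Local Notation V := 'rV[R]_n.
Implicit Types (u v w : V) (c : R).

Lemma ipC u v : ip u v = ip v u.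
Proof. by apply: eq_bigr => i _; rewrite mulrC. Qed.
Lemma ipDl u w v : ip (u + w) v = ip u v + ip w v.
Proof. by rewrite /ip -big_split; apply: eq_bigr => i _; rewrite mxE mulrDl. Qed.
Lemma ipDr u w v : ip v (u + w) = ip v u + ip v w.
Proof. by rewrite ipC ipDl !(ipC v). Qed.
Lemma ipZl c u v : ip (c *: u) v = c * ip u v.
Proof. by rewrite /ip mulr_sumr; apply: eq_bigr => i _; rewrite mxE mulrA. Qed.
Lemma ipZr c u v : ip v (c *: u) = c * ip v u.
Proof. by rewrite ipC ipZl ipC. Qed.
Lemma ipNl u v : ip (- u) v = - ip u v.
Proof. by rewrite -scaleN1r ipZl mulN1r. Qed.
Lemma ipNr u v : ip v (- u) = - ip v u.
Proof. by rewrite ipC ipNl ipC. Qed.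
Lemma ip_ge0 u : 0 <= ip u u.
Proof. by apply: sumr_ge0 => i _; rewrite -expr2 sqr_ge0. Qed.
Lemma ip0l v : ip 0 v = 0.
Proof. by rewrite -(scale0r 0) ipZl mul0r. Qed.

Lemma nrm_ge0 u : 0 <= nrm u.
Proof. exact: sqrtr_ge0. Qed.
Lemma nrm2 u : nrm u ^+ 2 = ip u u.
Proof. by rewrite sqr_sqrtr // ip_ge0. Qed.
Lemma nrm0 : nrm (0 : V) = 0.
Proof. by rewrite /nrm ip0l sqrtr0. Qed.

Lemma cs2 u v : ip u v ^+ 2 <= ip u u * ip v v.
Proof.
have H t : 0 <= ip u u - 2 * t * ip u v + t ^+ 2 * ip v v.
  have := ip_ge0 (u - t *: v).
  rewrite !(ipDl, ipDr, ipNl, ipNr, ipZl, ipZr) (ipC v u).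
  by move=> h; lra.
have hq := ip_ge0 v; have hp := ip_ge0 u.
case: (eqVneq (ip v v) 0) => hv0; last first.
  have hv : 0 < ip v v by rewrite lt_neqAle eq_sym hv0 hq.
  have := H (ip u v / ip v v).
  set p := ip u u; set q := ip v v; set r := ip u v => h.
  have : p - 2 * (r / q) * r + (r / q) ^+ 2 * q = (p * q - r ^+ 2) / q.
    by field; rewrite gt_eqF.
  by move=> this; move: h; rewrite this pmulr_lge0 ?invr_gt0 // subr_ge0.
case: (eqVneq (ip u v) 0) => hr; first by rewrite hr hv0 expr0n mulr0.
have := H ((ip u u + 1) / (2 * ip u v)).
rewrite hv0 mulr0 addr0.
have -> : 2 * ((ip u u + 1) / (2 * ip u v)) * ip u v = ip u u + 1.
  by field.
lra.
Qed.

Lemma cs u v : ip u v <= nrm u * nrm v.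
Proof.
rewrite /nrm -sqrtrM ?ip_ge0 //.
apply: le_trans (ler_norm _) _.
rewrite -sqrtr_sqr ler_sqrt; first exact: cs2.
by rewrite mulr_ge0 ?ip_ge0.
Qed.

Lemma nrmD u v : nrm (u + v) <= nrm u + nrm v.
Proof.
have h1 := nrm_ge0 u; have h2 := nrm_ge0 v.
rewrite {1}/nrm -[nrm u + nrm v]ger0_norm ?addr_ge0 // -sqrtr_sqr.
rewrite ler_sqrt; last exact: sqr_ge0.
rewrite !(ipDl, ipDr) (ipC v u) sqrrD !nrm2.
have := cs u v; lra.
Qed.

Lemma nrmZ c u : nrm (c *: u) = `|c| * nrm u.
Proof. by rewrite /nrm ipZl ipZr mulrA -expr2 sqrtrM ?sqr_ge0 // sqrtr_sqr. Qed.

Lemma nrmN u : nrm (- u) = nrm u.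
Proof. by rewrite /nrm ipNl ipNr opprK. Qed.

Lemma nrmB u v : nrm (u - v) = nrm (v - u).
Proof. by rewrite -nrmN opprB. Qed.

End L1.
Ltac pos0 := repeat first [ assumption | (apply: ltW; assumption) | apply: mulr_ge0 | apply: addr_ge0
  | apply: divr_ge0 | apply: sqrtr_ge0 | apply: ler01 | apply: ip_ge0 | apply: nrm_ge0 | apply: sqr_ge0 | apply: exprn_ge0 | rewrite invr_ge0 ].
Lemma gt1D {R : realType} (x : R) : 0 <= x -> 0 < 1 + x.
Proof. by move=> h; rewrite ltr_wpDr. Qed.
Section L2.
Context {R : realType} {n : nat}.
Local Notation V := 'rV[R]_n.

Lemma step_core (A a lam mu sig2 eps Hy : R) (P Q Vv W : V) :
  0 <= A -> 0 < a -> 0 < mu ->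
  lam = a ^+ 2 / ((1 + mu * A) * (A + a) + mu * A * a) ->
  ip (lam *: Vv - (((a - mu * A * lam) / (A + a)) *: P + ((A + mu * A * lam) / (A + a)) *: Q))
     (lam *: Vv - (((a - mu * A * lam) / (A + a)) *: P + ((A + mu * A * lam) / (A + a)) *: Q))
     / (1 + lam * mu) + 2 * lam * eps
  <= sig2 * ip (((a - mu * A * lam) / (A + a)) *: P + ((A + mu * A * lam) / (A + a)) *: Q)
               (((a - mu * A * lam) / (A + a)) *: P + ((A + mu * A * lam) / (A + a)) *: Q) ->
  (A + a) * Hy
  + (1 + mu * (A + a)) / 2 *
      ip (W - (((1 + mu * A) / (1 + mu * (A + a))) *: P - (a / (1 + mu * (A + a))) *: Vv))
         (W - (((1 + mu * A) / (1 + mu * (A + a))) *: P - (a / (1 + mu * (A + a))) *: Vv))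
  + (1 - sig2) * (A + a) / (2 * lam) *
      ip (((a - mu * A * lam) / (A + a)) *: P + ((A + mu * A * lam) / (A + a)) *: Q)
         (((a - mu * A * lam) / (A + a)) *: P + ((A + mu * A * lam) / (A + a)) *: Q)
  <= A * (Hy - eps + ip Vv Q + mu / 2 * ip Q Q)
     + a * (Hy - eps + ip Vv W + mu / 2 * ip W W)
     + (1 + mu * A) / 2 * ip (W - P) (W - P).
Proof.
move=> hA ha hmu hl.
set al := (a - mu * A * lam) / (A + a).
set be := (A + mu * A * lam) / (A + a).
set T := al *: P + be *: Q.
set X := _ *: P - _ *: Vv.
move=> herr.
have h1 : 0 < 1 + mu * A by rewrite ltr_wpDr // mulr_ge0 // ltW.
have hAa : 0 < A + a by rewrite ltr_wpDl.
have h2 : 0 <= mu * A * a by rewrite !mulr_ge0 // ltW.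
have h3 : 0 < (1 + mu * A) * (A + a) by rewrite mulr_gt0.
set D := (1 + mu * A) * (A + a) + mu * A * a in hl.
have hD : 0 < D by rewrite /D; lra.
have hlam : 0 < lam by rewrite hl divr_gt0 // exprn_gt0.
have hlD : lam * D = a ^+ 2 by rewrite hl mulfVK ?gt_eqF.
have hlm : 0 < 1 + lam * mu by rewrite addr_gt0 // mulr_gt0.
have hal : 0 <= al.
  rewrite /al; apply: divr_ge0; last exact: ltW.
  have e : a * (a - mu * A * lam) = lam * ((1 + mu * A) * (A + a)).
    by rewrite mulrBr -expr2 -hlD /D; ring.
  have : 0 <= a * (a - mu * A * lam) by rewrite e mulr_ge0 // ltW.
  by rewrite pmulr_rge0.
have hbe : 0 <= be.
  rewrite /be; apply: divr_ge0; last exact: ltW.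
  by rewrite addr_ge0 // !mulr_ge0 // ltW.
have hab : al + be = 1 by rewrite /al /be -mulrDl; field; rewrite gt_eqF.
set B1 := sig2 * ip T T - ip (lam *: Vv - T) (lam *: Vv - T) / (1 + lam * mu) - 2 * lam * eps.
have hB1 : 0 <= B1 by rewrite /B1; lra.
set B2 := al * ip P P + be * ip Q Q - ip T T.
have hB2 : 0 <= B2.
  have -> : B2 = al * be * ip (P - Q) (P - Q).
    rewrite /B2 /T !(ipDl, ipDr, ipNl, ipNr, ipZl, ipZr) (ipC Q P).
    have -> : be = 1 - al by lra.
    ring.
  by rewrite mulr_ge0 ?ip_ge0 // mulr_ge0.
set K := (A + a) / (1 + lam * mu).
have key : A * (Hy - eps + ip Vv Q + mu / 2 * ip Q Q)
     + a * (Hy - eps + ip Vv W + mu / 2 * ip W W)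
     + (1 + mu * A) / 2 * ip (W - P) (W - P)
     - ((A + a) * Hy + (1 + mu * (A + a)) / 2 * ip (W - X) (W - X)
        + (1 - sig2) * (A + a) / (2 * lam) * ip T T)
   = (A + a) / (2 * lam) * B1 + mu * K / 2 * B2.
  rewrite /B1 /B2 /K /X /T /al /be.
  rewrite !(ipDl, ipDr, ipNl, ipNr, ipZl, ipZr).
  rewrite ?(ipC Q P) ?(ipC Vv P) ?(ipC W P) ?(ipC Vv Q) ?(ipC W Q) ?(ipC W Vv).
  rewrite hl /D.
  field.
  have h4 : 0 < (1 + mu * A) * (A + a) + mu * A * a + a ^+ 2 * mu.
    by rewrite addr_gt0 // mulr_gt0 // exprn_gt0.
  have h5 : 0 < 1 + mu * (A + a) by rewrite addr_gt0 // mulr_gt0.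
  by rewrite (gt_eqF hAa) (gt_eqF hD) (gt_eqF h4) (gt_eqF ha) (gt_eqF h5).
have : 0 <= (A + a) / (2 * lam) * B1 + mu * K / 2 * B2.
  have c1 : 0 <= (A + a) / (2 * lam) by rewrite ltW // divr_gt0 // mulr_gt0.
  have c2 : 0 <= mu * K / 2 by rewrite ltW // divr_gt0 // mulr_gt0 // divr_gt0.
  exact: addr_ge0 (mulr_ge0 c1 hB1) (mulr_ge0 c2 hB2).
by rewrite -key subr_ge0.
Qed.
End L2.
Section L3.
Context {R : realType} {n : nat}.
Local Notation V := 'rV[R]_n.

Lemma le_eps (X Y C : R) : 0 <= C -> (forall e : R, 0 < e -> Y <= X + e * C) -> Y <= X.
Proof.
move=> hC H; apply/ler_addgt0Pr => e he.
have hC1 : 0 < C + 1 by lra.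
apply: (le_trans (H (e / (C + 1)) _)); first by rewrite divr_gt0.
rewrite lerD2l.
have -> : e / (C + 1) * C = e * (C / (C + 1)) by rewrite mulrAC mulrA.
rewrite ger_pMr // ler_pdivrMr //; lra.
Qed.

Lemma lincomb_eq (t : R) (w z : V) : t *: w + (1 - t) *: z = z + t *: (w - z).
Proof. by apply/rowP => i; rewrite !mxE; ring. Qed.

Lemma grad_ineq (g : V -> \bar R) (mu : R) (z d : V) (gz : R) : 0 <= mu ->
  (forall x, g x != -oo%E) -> strongly_convex_fn mu g -> has_gradient g z d ->
  g z = gz%:E ->
  forall w, (g z + (ip d (w - z) + mu / 2 * nrm (w - z) ^+ 2)%:E <= g w)%E.
Proof.
move=> hmu hprop hsc [_ hfr] hz w.
case E: (g w) => [gw| |]; last by move: (hprop w); rewrite E.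
  2: by rewrite leey.
rewrite hz -EFinD lee_fin.
set N := nrm (w - z).
have hN := nrm_ge0 (w - z).
apply: (@le_eps _ _ (N + mu / 2 * N ^+ 2)).
  by rewrite addr_ge0 // mulr_ge0 ?sqr_ge0 // divr_ge0.
move=> e he.
have [dl hdl Hd] := hfr e he.
have he1 : 0 < 1 + e by clear -he; lra.
have hdN : 0 < dl + N by move: hN; rewrite -/N; clear -hdl; lra.
have hZ : 0 < (1 + e) * (dl + N) by rewrite mulr_gt0.
set t := e * dl / ((1 + e) * (dl + N)).
have ht0 : 0 < t by rewrite divr_gt0 // mulr_gt0.
have hte : t <= e.
  rewrite ler_pdivrMr // -subr_ge0.
  have -> : e * ((1 + e) * (dl + N)) - e * dl = e * (e * dl + (1 + e) * N) by ring.
  apply: mulr_ge0; first exact: ltW.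
  by apply: addr_ge0; apply: mulr_ge0 => //; apply: ltW.
have ht1 : t <= 1.
  rewrite ler_pdivrMr // mul1r -subr_ge0.
  have -> : (1 + e) * (dl + N) - e * dl = dl + (1 + e) * N by ring.
  by apply: addr_ge0; [apply: ltW | apply: mulr_ge0 => //; apply: ltW].
have htN : t * N < dl.
  rewrite /t mulrAC ltr_pdivrMr // -subr_gt0.
  have -> : dl * ((1 + e) * (dl + N)) - e * dl * N = dl * (dl + N + e * dl) by ring.
  by rewrite mulr_gt0 // ltr_wpDr ?mulr_ge0 ?ltW // ltr_wpDr.
set h := t *: (w - z).
have hnh : nrm h = t * N by rewrite /h nrmZ ger0_norm // ltW.
have := Hd h; rewrite hnh => /(_ htN).
rewrite hz /= /h ipZr => hfr2.
have hwd : w \in dom g by rewrite in_setE /dom /= E ltry.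
have hzd : z \in dom g by rewrite in_setE /dom /= hz ltry.
have := hsc w z t hwd hzd; rewrite (ltW ht0) ht1 => /(_ isT).
have eE : (t%:E * gw%:E + (1 - t)%:E * gz%:E - (mu / 2 * t * (1 - t) * nrm (w - z) ^+ 2)%:E)%E
  = (t * gw + (1 - t) * gz - mu / 2 * t * (1 - t) * nrm (w - z) ^+ 2)%:E.
  by rewrite EFinB EFinD !EFinM.
rewrite lincomb_eq E hz eE -/h.
case E2: (g (z + h)) => [G1| |]; last by move: (hprop (z + h)); rewrite E2.
  2: by rewrite leNgt ltry.
rewrite lee_fin => hG1.
move: hfr2; rewrite E2 /= => /ler_normlP [hf1 hf2].
have hN2 : 0 <= mu * N ^+ 2 by rewrite mulr_ge0 ?sqr_ge0.
have key : t * (gz + ip d (w - z) + mu / 2 * N ^+ 2 - gw - e * N - mu / 2 * t * N ^+ 2) <= 0.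
  rewrite -/N in hG1; nra.
have key2 : gz + ip d (w - z) + mu / 2 * N ^+ 2 - gw - e * N - mu / 2 * t * N ^+ 2 <= 0.
  by move: key; rewrite pmulr_rle0.
have : mu / 2 * t * N ^+ 2 <= mu / 2 * e * N ^+ 2.
  clear -hte hN2; nra.
move=> h3; clear -key2 h3; lra.
Qed.
End L3.
Section L4.
Context {R : realType} {n : nat}.
Local Notation V := 'rV[R]_n.

Lemma sqr_le (a b : R) : 0 <= a -> 0 <= b -> (a ^+ 2 <= b ^+ 2) = (a <= b).
Proof. by move=> ha hb; rewrite ler_sqr ?nnegrE. Qed.

Lemma ipBZ (a b : V) (t : R) :
  ip (a - t *: b) (a - t *: b) = ip a a - 2 * t * ip a b + t ^+ 2 * ip b b.
Proof. rewrite !(ipDl, ipDr, ipNl, ipNr, ipZl, ipZr) (ipC b a); ring. Qed.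

Lemma ipB (a b : V) : ip (a - b) (a - b) = ip a a - 2 * ip a b + ip b b.
Proof. rewrite !(ipDl, ipDr, ipNl, ipNr) (ipC b a); ring. Qed.

Lemma proj_nonexp (O : set V) (x z w : V) :
  cvx_set O -> is_proj O x z -> O w -> nrm (w - z) <= nrm (w - x).
Proof.
move=> hcv [hz hmin] hw.
have hip : ip (x - z) (w - z) <= 0.
  apply: (@le_eps _ _ _ (ip (w - z) (w - z) / 2)).
    by rewrite divr_ge0 ?ip_ge0.
  move=> e he.
  set t := e / (1 + e).
  have he1 : 0 < 1 + e by clear -he; lra.
  have ht0 : 0 < t by rewrite divr_gt0.
  have hte : t <= e by rewrite ler_pdivrMr // ler_peMr ?ltW //; clear -he; lra.
  have ht1 : t <= 1 by rewrite ler_pdivrMr // mul1r; clear -he; lra.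
  have hO := hcv w z t hw hz; rewrite (ltW ht0) ht1 in hO.
  have := hmin _ (hO isT).
  rewrite -sqr_le ?nrm_ge0 // !nrm2 lincomb_eq.
  have -> : x - (z + t *: (w - z)) = (x - z) - t *: (w - z).
    by apply/rowP => i; rewrite !mxE; ring.
  rewrite ipBZ; set a := x - z; set b := w - z.
  move=> h.
  have h2 : t * (ip a b - t * ip b b / 2) <= 0.
    by move: h; clear; lra.
  have h3 : ip (x - z) (w - z) - t * ip (w - z) (w - z) / 2 <= 0.
    by move: h2; rewrite pmulr_rle0.
  have hq := ip_ge0 (w - z).
  have : t * ip (w - z) (w - z) <= e * ip (w - z) (w - z) by rewrite ler_wpM2r.
  by move: h3; clear; lra.
rewrite -sqr_le ?nrm_ge0 // !nrm2.
have -> : w - x = (w - z) - (x - z) by apply/rowP => i; rewrite !mxE; ring.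
have := ip_ge0 (x - z).
move: hip; rewrite (ipB (w - z) (x - z)) (ipC (w - z) (x - z)).
by clear; lra.
Qed.

Lemma qgrowth (f g : V -> \bar R) (mu : R) (y xs : V) (fy gy fx gx : R) :
  0 <= mu -> (forall x, f x != -oo%E) -> (forall x, g x != -oo%E) ->
  convex_fn f -> strongly_convex_fn mu g ->
  f y = fy%:E -> g y = gy%:E -> f xs = fx%:E -> g xs = gx%:E ->
  (forall w, (f xs + g xs <= f w + g w)%E) ->
  mu / 2 * nrm (y - xs) ^+ 2 <= fy + gy - (fx + gx).
Proof.
move=> hmu hpf hpg hcf hcg efy egy efx egx hmin.
set N := nrm (y - xs).
have hN2 : 0 <= mu / 2 * N ^+ 2 by rewrite mulr_ge0 ?sqr_ge0 // divr_ge0.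
apply: (@le_eps _ _ _ (mu / 2 * N ^+ 2)) => // e he.
set t := e / (1 + e).
have he1 : 0 < 1 + e by clear -he; lra.
have ht0 : 0 < t by rewrite divr_gt0.
have hte : t <= e by rewrite ler_pdivrMr // ler_peMr ?ltW //; clear -he; lra.
have ht1 : t <= 1 by rewrite ler_pdivrMr // mul1r; clear -he; lra.
have ht01 : 0 <= t <= 1 by rewrite (ltW ht0) ht1.
have hyd : y \in dom g by rewrite in_setE /dom /= egy ltry.
have hxd : xs \in dom g by rewrite in_setE /dom /= egx ltry.
have Hf := hcf y xs t ht01.
have Hg := hcg y xs t hyd hxd ht01.
have Hm := hmin (t *: y + (1 - t) *: xs).
rewrite efy efx in Hf; rewrite egy egx in Hg; rewrite efx egx in Hm.
have eq1 : (t%:E * fy%:E + (1 - t)%:E * fx%:E)%E = (t * fy + (1 - t) * fx)%:E.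
  by rewrite EFinD !EFinM.
have eq2 : (t%:E * gy%:E + (1 - t)%:E * gx%:E - (mu / 2 * t * (1 - t) * N ^+ 2)%:E)%E
   = (t * gy + (1 - t) * gx - mu / 2 * t * (1 - t) * N ^+ 2)%:E.
  by rewrite EFinB EFinD !EFinM.
rewrite eq1 in Hf; rewrite eq2 in Hg; rewrite -EFinD in Hm.
move: Hf Hg Hm.
set zt := t *: y + (1 - t) *: xs.
case Ef: (f zt) => [fz| |]; last by move: (hpf zt); rewrite Ef.
  2: by rewrite leNgt ltry.
case Eg: (g zt) => [gz| |]; last by move: (hpg zt); rewrite Eg.
  2: by move=> _; rewrite leNgt ltry.
rewrite -EFinD !lee_fin => h1 h2 h3.
have key : t * (mu / 2 * N ^+ 2 - (fy + gy - (fx + gx)) - t * (mu / 2 * N ^+ 2)) <= 0.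
  by move: h1 h2 h3; rewrite -/N; clear; lra.
have key2 : mu / 2 * N ^+ 2 - (fy + gy - (fx + gx)) - t * (mu / 2 * N ^+ 2) <= 0.
  by move: key; rewrite pmulr_rle0.
have : t * (mu / 2 * N ^+ 2) <= e * (mu / 2 * N ^+ 2) by rewrite ler_wpM2r.
by move: key2; clear; lra.
Qed.

Lemma err_comb (lam mu L sh su eps : R) (u Gz Gy y x : V) :
  0 < lam -> 0 < mu -> 0 <= sh -> 0 <= su -> 0 <= eps ->
  lam * L = su * Num.sqrt (1 + lam * mu) ->
  nrm (Gy - Gz) <= L * nrm (y - x) ->
  nrm (lam *: (u + Gz) + y - x) ^+ 2 / (1 + lam * mu) + 2 * lam * eps
    <= sh ^+ 2 * nrm (y - x) ^+ 2 ->
  nrm (lam *: (u + Gy) + y - x) ^+ 2 / (1 + lam * mu) + 2 * lam * eps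
    <= (sh + su) ^+ 2 * nrm (y - x) ^+ 2.
Proof.
move=> hl hmu hsh hsu heps hlL hlip herr.
set c := Num.sqrt (1 + lam * mu).
have hc1 : 0 < 1 + lam * mu by rewrite addr_gt0 // mulr_gt0.
have hc : 0 < c by rewrite sqrtr_gt0.
have hc2 : c ^+ 2 = 1 + lam * mu by rewrite sqr_sqrtr // ltW.
have hpp : nrm (lam *: (u + Gy) + y - x) <= nrm (lam *: (u + Gz) + y - x) + su * c * nrm (y - x).
  have -> : lam *: (u + Gy) + y - x = (lam *: (u + Gz) + y - x) + lam *: (Gy - Gz).
    by apply/rowP => i; rewrite !mxE; ring.
  apply: (le_trans (nrmD _ _)); rewrite lerD2l nrmZ (ger0_norm (ltW hl)).
  by rewrite -hlL -mulrA ler_pM2l.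
set p := nrm (lam *: (u + Gz) + y - x) in herr hpp *.
set p' := nrm (lam *: (u + Gy) + y - x) in hpp *.
set r := nrm (y - x) in herr hpp *.
have hp : 0 <= p := nrm_ge0 _.
have hp' : 0 <= p' := nrm_ge0 _.
have hr : 0 <= r := nrm_ge0 _.
rewrite -hc2 in herr *.
have e1 : p ^+ 2 / c ^+ 2 = (p / c) ^+ 2 by rewrite expr_div_n.
have e2 : p' ^+ 2 / c ^+ 2 = (p' / c) ^+ 2 by rewrite expr_div_n.
rewrite e1 in herr; rewrite e2.
have hP : 0 <= p / c by rewrite divr_ge0 // ltW.
have hP' : 0 <= p' / c by rewrite divr_ge0 // ltW.
have hPs : p / c <= sh * r.
  rewrite -sqr_le // ?mulr_ge0 //.
  have : 0 <= 2 * lam * eps by rewrite !mulr_ge0 // ltW.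
  by move: herr; clear; lra.
have hPs' : p' / c <= p / c + su * r.
  by rewrite ler_pdivrMr // mulrDl divfK ?gt_eqF // mulrAC.
have hsq : (p' / c) ^+ 2 <= (p / c + su * r) ^+ 2.
  by rewrite sqr_le // addr_ge0 // mulr_ge0.
have hx : 0 <= (sh * r - p / c) * (su * r) by rewrite mulr_ge0 ?subr_ge0 // mulr_ge0.
by move: herr hsq hx; clear; nra.
Qed.
End L4.
Section L5.
Context {R : realType}.

Lemma powhalf (x : R) (m : nat) : 0 <= x -> x `^ (m%:R / 2) = Num.sqrt (x ^+ m).
Proof. by move=> hx; rewrite powRrM powR_mulrn // powR12_sqrt // exprn_ge0. Qed.

Lemma rec_sol (lam mu A a : R) : 0 < lam -> 0 < mu -> 0 <= A ->
  a = ((1 + 2 * mu * A) * lam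
       + Num.sqrt ((1 + 2 * mu * A) ^+ 2 * lam ^+ 2 + 4 * (1 + mu * A) * A * lam)) / 2 ->
  0 < a /\ lam = a ^+ 2 / ((1 + mu * A) * (A + a) + mu * A * a).
Proof.
move=> hl hmu hA ->.
set B := (1 + 2 * mu * A) * lam.
set C := (1 + mu * A) * A * lam.
have hB : 0 < B by rewrite mulr_gt0 // gt1D //; pos0.
have hC : 0 <= C by rewrite /C; pos0.
have -> : (1 + 2 * mu * A) ^+ 2 * lam ^+ 2 + 4 * (1 + mu * A) * A * lam = B ^+ 2 + 4 * C.
  by rewrite /B /C; ring.
set s := Num.sqrt (B ^+ 2 + 4 * C).
have hs : 0 <= s := sqrtr_ge0 _.
have hs2 : s ^+ 2 = B ^+ 2 + 4 * C by rewrite sqr_sqrtr //; pos0.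
have ha : 0 < (B + s) / 2 by rewrite divr_gt0 // ltr_wpDr.
split => //.
set a0 := (B + s) / 2.
have hsq : a0 ^+ 2 = B * a0 + C.
  rewrite /a0; apply: (@mulfI _ 4); first by [].
  have -> : 4 * ((B + s) / 2) ^+ 2 = B ^+ 2 + 2 * B * s + s ^+ 2 by field.
  by rewrite hs2; field.
have hD : 0 < (1 + mu * A) * (A + a0) + mu * A * a0.
  rewrite ltr_wpDr; [|pos0|]; first by [].
  by rewrite mulr_gt0 // ?gt1D ?ltr_wpDl //; pos0.
have e : lam * ((1 + mu * A) * (A + a0) + mu * A * a0) = a0 ^+ 2 by rewrite hsq /B /C; ring.
by rewrite -e mulfK ?gt_eqF.
Qed.

Lemma growth (lam mu L sigu A a : R) :
  0 < lam -> 0 < mu -> mu <= L -> 0 < sigu -> sigu <= lam * L -> 0 <= A -> 0 < a ->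
  lam = a ^+ 2 / ((1 + mu * A) * (A + a) + mu * A * a) ->
  A <= (1 - Num.sqrt (sigu / (1 + sigu)) * Num.sqrt (mu / L)) * (A + a).
Proof.
move=> hl hmu hmL hs hsl hA ha hlam.
have hL : 0 < L by apply: lt_le_trans hmL.
set g0 := Num.sqrt (sigu / (1 + sigu)) * Num.sqrt (mu / L).
have hg0 : 0 <= g0 by rewrite /g0; pos0.
have hg2 : g0 ^+ 2 = sigu / (1 + sigu) * (mu / L).
  by rewrite exprMn !sqr_sqrtr //; pos0.
set D := (1 + mu * A) * (A + a) + mu * A * a in hlam.
have hD : 0 < D.
  rewrite /D ltr_wpDr; [|pos0|]; first by [].
  by rewrite mulr_gt0 // ?gt1D ?ltr_wpDl //; pos0.
have ha2 : a ^+ 2 = lam * D by rewrite hlam mulfVK ?gt_eqF.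
have e1 : a ^+ 2 * (1 + lam * mu) = lam * (A + a) + lam * mu * (A + a) ^+ 2.
  by rewrite mulrDr mulr1 [in X in X + _]ha2 /D; ring.
have h3 : g0 ^+ 2 * (1 + lam * mu) <= lam * mu.
  rewrite hg2.
  have hs1 : 0 < 1 + sigu by lra.
  rewrite -(ler_pM2r (mulr_gt0 hs1 hL)).
  have -> : sigu / (1 + sigu) * (mu / L) * (1 + lam * mu) * ((1 + sigu) * L) = mu * (sigu + sigu * (lam * mu)).
    by field; rewrite !gt_eqF.
  have -> : lam * mu * ((1 + sigu) * L) = mu * (lam * L + sigu * (lam * L)) by ring.
  rewrite ler_pM2l // lerD //.
  rewrite ler_pM2l //. rewrite ler_pM2l //.
have hlm : 0 < 1 + lam * mu by rewrite addr_gt0 // mulr_gt0.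
have h4 : g0 ^+ 2 * (A + a) ^+ 2 <= a ^+ 2.
  rewrite -(ler_pM2r hlm) e1.
  have : 0 <= lam * (A + a) by pos0.
  have : g0 ^+ 2 * (1 + lam * mu) * (A + a) ^+ 2 <= lam * mu * (A + a) ^+ 2.
    by rewrite ler_wpM2r // sqr_ge0.
  clear; move=> h1 h2; lra.
have h5 : g0 * (A + a) <= a.
  by rewrite -sqr_le; [rewrite exprMn | pos0 | pos0].
by move: h5; clear; lra.
Qed.
End L5.
Lemma vec_comb {R : realType} {n : nat} (al : R) (x1 x2 y0 : 'rV[R]_n) :
  al *: x1 + (1 - al) *: x2 - y0 = al *: (x1 - y0) + (1 - al) *: (x2 - y0).
Proof. by apply/rowP => i; rewrite !mxE; ring. Qed.

Section MH.
Context {R : realType}.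
Lemma efin3 (a b c : R) : (a%:E + b%:E - c%:E)%E = (a + b - c)%:E.
Proof. by rewrite EFinB EFinD. Qed.

Lemma dist_bound (mu L sigu A N2 d q : R) : 0 < mu -> 0 < L -> 0 < sigu -> 0 <= N2 -> 0 <= q ->
  mu * A * N2 <= d -> sigu / L <= q * A -> N2 <= L / (sigu * mu) * d * q.
Proof.
move=> hmu hL hs hN hq h1 h2.
have h3 : sigu / L * N2 <= q * A * N2 by rewrite ler_wpM2r.
have h4 : mu * (q * A * N2) <= q * d.
  have -> : mu * (q * A * N2) = q * (mu * A * N2) by ring.
  by rewrite ler_wpM2l.
have hc : 0 < sigu * mu / L by rewrite divr_gt0 // mulr_gt0.
rewrite -(ler_pM2l hc).
have -> : sigu * mu / L * (L / (sigu * mu) * d * q) = q * d.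
  by field; rewrite !gt_eqF.
apply: le_trans h4.
have -> : sigu * mu / L * N2 = mu * (sigu / L * N2) by ring.
by rewrite ler_pM2l.
Qed.

Lemma sqrt_le (N E : R) : 0 <= N -> N ^+ 2 <= E -> N <= Num.sqrt E.
Proof.
move=> hN hE; rewrite -(ger0_norm hN) -sqrtr_sqr ler_sqrt //.
by apply: le_trans hE; rewrite sqr_ge0.
Qed.

Lemma sqrt3 (a b c : R) : 0 <= a -> 0 <= b -> 0 <= c ->
  Num.sqrt (a * b ^+ 2 * c) = Num.sqrt a * b * Num.sqrt c.
Proof.
move=> ha hb hc; rewrite sqrtrM ?mulr_ge0 ?sqr_ge0 // sqrtrM // sqrtr_sqr ger0_norm //.
Qed.
End MH.
Lemma oo_add_le {R : realType} (a b : R) (z : \bar R) : (+oo + a%:E - b%:E <= z)%E -> z = +oo%E.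
Proof.
have e1 : (+oo + a%:E = +oo)%E by apply: addye.
have e2 : (+oo - b%:E = +oo)%E by apply: addye.
by rewrite e1 e2 leye_eq => /eqP.
Qed.
Lemma oo_ltr {R : realType} (x : \bar R) : x != -oo%E -> (x + +oo < +oo)%E -> False.
Proof. move=> hx; have e : (x + +oo = +oo)%E by apply: addey.
by rewrite e ltxx. Qed.
Lemma oo_ltl {R : realType} (x : \bar R) : x != -oo%E -> (+oo + x < +oo)%E -> False.
Proof. move=> hx; have e : (+oo + x = +oo)%E by apply: addye.
by rewrite e ltxx. Qed.
Lemma efin4 {R : realType} (a b c d : R) :
  (a%:E + b%:E - (c%:E + d%:E))%E = (a + b - (c + d))%:E.
Proof. by rewrite EFinB !EFinD. Qed.
Lemma sqrt_cube {R : realType} (x : R) : 0 <= x -> Num.sqrt (x ^+ 3) = x * Num.sqrt x.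
Proof.
move=> hx; have -> : x ^+ 3 = x ^+ 2 * x by rewrite -exprSr.
by rewrite sqrtrM ?sqr_ge0 // sqrtr_sqr ger0_norm.
Qed.
Theorem theorem5p3 (R : realType) (n : nat)
    (f g : 'rV[R]_n -> \bar R) (mu L : R) (Omega : set 'rV[R]_n)
    (P G : 'rV[R]_n -> 'rV[R]_n)
    (sighat sigu : R)
    (x y u v xt : nat -> 'rV[R]_n) (eps A a : nat -> R)
    (xs : 'rV[R]_n) :
  (* standing assumptions *)
  proper_fn f -> lsc_fn f -> convex_fn f ->
  proper_fn g -> lsc_fn g -> convex_fn g ->
  (exists z, ((f z + g z) < +oo)%E) ->
  0 < mu -> strongly_convex_fn mu g ->
  (exists z, Omega z) -> closed_set Omega -> cvx_set Omega ->
  dom f `<=` Omega ->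
  (forall z, is_proj Omega z (P z)) ->
  (exists2 U : set 'rV[R]_n, open_set U /\ Omega `<=` U &
     forall z, U z -> has_gradient g z (G z)) ->
  0 < L ->
  (forall z w, Omega z -> Omega w -> nrm (G z - G w) <= L * nrm (z - w)) ->
  (* additional assumption *)
  mu <= L ->
  (* Algorithm 4 *)
  0 <= sighat -> 0 < sigu <= 1 -> sigu + sighat < 1 ->
  let lam := sigu / (Num.sqrt ((sigu * mu / 2) ^+ 2 + L ^+ 2) - sigu * mu / 2) in
  A 0%N = 0 ->
  (forall k,
     a k.+1 = ((1 + 2 * mu * A k) * lam
               + Num.sqrt ((1 + 2 * mu * A k) ^+ 2 * lam ^+ 2
                           + 4 * (1 + mu * A k) * A k * lam)) / 2 /\
     xt k = ((a k.+1 - mu * A k * lam) / (A k + a k.+1)) *: x k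
            + ((A k + mu * A k * lam) / (A k + a k.+1)) *: y k /\
     approx_PG f G P mu sighat (xt k) lam (y k.+1) (u k.+1) (eps k.+1) /\
     A k.+1 = A k + a k.+1 /\
     v k.+1 = u k.+1 + G (y k.+1) /\
     x k.+1 = ((1 + mu * A k) / (1 + mu * A k.+1)) *: x k
              + ((mu * a k.+1) / (1 + mu * A k.+1)) *: y k.+1
              - (a k.+1 / (1 + mu * A k.+1)) *: v k.+1) ->
  (* x* is the minimizer of h = f + g *)
  (forall w, (f xs + g xs <= f w + g w)%E) ->
  let sig := sighat + sigu in
  let d0 := nrm (xs - x 0%N) in
  let gam := Num.sqrt (sigu / (1 + sigu)) in
  let rho := 1 - gam * Num.sqrt (mu / L) in
  (* (a) *)
  (forall k, (1 <= k)%N ->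
     ((f (y k) + g (y k)) - (f xs + g xs) <=
        (L * d0 ^+ 2 / (2 * sigu) * rho ^+ k.-1)%:E)%E /\
     Num.max (nrm (xs - y k)) (nrm (xs - x k))
       <= Num.sqrt (L / (sigu * mu)) * d0 * rho `^ (k.-1%:R / 2)) /\
  (* (b) *)
  (forall k, (1 <= k)%N ->
     (exists2 w, eps_subdiff f (eps k.+1) (y k.+1) w & v k.+1 = w + G (y k.+1)) /\
     nrm (v k.+1) <= 6 * d0 * L `^ (3 / 2) / (mu `^ (1 / 2) * sigu `^ (3 / 2))
                      * (1 + sig * Num.sqrt (1 + sigu * mu / L)) * rho `^ (k.-1%:R / 2) /\
     eps k.+1 <= 3 * sig ^+ 2 * d0 ^+ 2 * L ^+ 2 / (sigu ^+ 2 * mu) * rho ^+ k.-1).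
Proof.
move=> hpf hlf hcf hpg hlg hcg hz0 hmu hsc hO0 hOc hOcv hdom hproj hU hL hlip hmuL hsh hsu hsig.
move=> lam hA0 halg hmin sig d0 gam rho.
case: hU => U [hUo hOU] hgrad.
case/andP: hsu => hsu0 hsu1.
case: hpf => hpfn [zf hzf].
case: hpg => hpgn _.
set c0 := sigu * mu / 2.
have hc0 : 0 < c0 by rewrite divr_gt0 // mulr_gt0.
set S := Num.sqrt (c0 ^+ 2 + L ^+ 2).
have hS2 : S ^+ 2 = c0 ^+ 2 + L ^+ 2 by rewrite sqr_sqrtr //; pos0.
have hSc : c0 < S.
  rewrite -(ger0_norm (ltW hc0)) -sqrtr_sqr ltr_sqrt; last by rewrite ltr_wpDl ?sqr_ge0 // exprn_gt0.
  by rewrite ltrDl exprn_gt0.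
have hSc0 : 0 < S - c0 by rewrite subr_gt0.
have hlamE : lam = sigu / (S - c0) by [].
have hlam0 : 0 < lam by rewrite hlamE divr_gt0.
have hlL : lam * L = sigu * Num.sqrt (1 + lam * mu).
  have e : 1 + lam * mu = (lam * L / sigu) ^+ 2.
    have -> : (lam * L / sigu) ^+ 2 = L ^+ 2 / (S - c0) ^+ 2.
      by rewrite hlamE; field; rewrite (gt_eqF hSc0) (gt_eqF hsu0).
    have -> : L ^+ 2 = S ^+ 2 - c0 ^+ 2 by rewrite hS2; ring.
    have e2 : sigu * mu = 2 * c0 by rewrite /c0; field.
    have -> : lam * mu = 2 * c0 / (S - c0) by rewrite hlamE mulrAC e2.
    by field; rewrite (gt_eqF hSc0).
  rewrite e sqrtr_sqr ger0_norm; last by pos0.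
  by field; rewrite (gt_eqF hsu0).
have hs1 : 1 <= Num.sqrt (1 + lam * mu).
  rewrite -{1}sqrtr1 ler_sqrt; last by pos0.
  by rewrite lerDl; pos0.
have hlLlo : sigu <= lam * L.
  by rewrite hlL -{1}(mulr1 sigu) ler_pM2l.
have hlLhi : lam * L <= 2 * sigu.
  have hX2 : (lam * L) ^+ 2 = sigu ^+ 2 * (1 + lam * mu).
    by rewrite hlL exprMn sqr_sqrtr //; pos0.
  have h1 : lam * mu * sigu <= lam * L.
    rewrite -mulrA ler_pM2l // -[L]mulr1.
    by apply: ler_pM => //; pos0.
  have h2 : 0 <= lam * L by pos0.
  move: hX2 h1 h2 hsu0 hsu1; clear; move=> hX2 h1 h2 h3 h4; nra.
have hA : forall k, 0 <= A k /\ (0 < a k.+1 /\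
    lam = a k.+1 ^+ 2 / ((1 + mu * A k) * (A k + a k.+1) + mu * A k * a k.+1)).
  elim=> [|k [hAk [hak hlk]]].
    split; first by rewrite hA0.
    by apply: rec_sol => //; [rewrite hA0 | case: (halg 0%N)].
  have hAk1 : 0 <= A k.+1.
    by case: (halg k) => _ [_ [_ [-> _]]]; rewrite addr_ge0 // ltW.
  by split => //; apply: rec_sol => //; case: (halg k.+1).
have hgr : forall k, A k <= rho * A k.+1.
  move=> k; have [hAk [hak hlk]] := hA k.
  case: (halg k) => _ [_ [_ [-> _]]].
  exact: (@growth _ _ _ _ _ _ _ hlam0 hmu hmuL hsu0 hlLlo hAk hak hlk).
have hg0 : 0 <= gam * Num.sqrt (mu / L) by rewrite /gam; pos0.
have hg1 : gam * Num.sqrt (mu / L) < 1.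
  have e : (gam * Num.sqrt (mu / L)) ^+ 2 = sigu / (1 + sigu) * (mu / L).
    by rewrite exprMn /gam !sqr_sqrtr //; pos0.
  have h1 : sigu / (1 + sigu) < 1 by rewrite ltr_pdivrMr ?mul1r ?ltrDr //; apply: gt1D; pos0.
  have h2 : mu / L <= 1 by rewrite ler_pdivrMr // mul1r.
  have h3 : 0 <= mu / L by pos0.
  have h4 : 0 <= sigu / (1 + sigu) by pos0.
  have h5 : (gam * Num.sqrt (mu / L)) ^+ 2 < 1.
    by rewrite e; move: h1 h2 h3 h4; clear; nra.
  move: h5 hg0; clear; move=> h5 hg0; nra.
have hrho0 : 0 < rho by rewrite /rho subr_gt0.
have hrho1 : rho <= 1 by rewrite /rho lerBlDr lerDl.
have hA1 : A 1%N = lam.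
  case: (halg 0%N) => ha1 [_ [_ [hA1 _]]].
  rewrite hA1 hA0 add0r ha1 hA0 !(mulr0, mul0r, addr0, mul1r, expr1n).
  by rewrite sqrtr_sqr ger0_norm ?ltW //; field.
have hAlow : forall k, sigu / L <= rho ^+ k * A k.+1.
  elim=> [|k IH]; first by rewrite expr0 mul1r hA1 ler_pdivrMr.
  apply: (le_trans IH); rewrite exprS -mulrA mulrCA.
  by apply: ler_wpM2l; [apply: exprn_ge0; exact: ltW | exact: hgr].
have hfy : forall k, f (y k.+1) = (fine (f (y k.+1)))%:E.
  move=> k; case: (halg k) => _ [_ [[_ [hsub _]] _]].
  have := hsub zf; move: (hpfn (y k.+1)).
  case: (f (y k.+1)) => [r| |] // _.
  move/oo_add_le => h.
  by move: hzf; rewrite h ltxx.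
have hyO : forall k, Omega (y k.+1).
  by move=> k; apply: hdom; rewrite /dom /= hfy ltry.
have hgy : forall k, g (y k.+1) = (fine (g (y k.+1)))%:E /\ has_gradient g (y k.+1) (G (y k.+1)).
  move=> k; have hgr1 := hgrad _ (hOU _ (hyO k)).
  split => //; case: (hgr1) => [[r hr hfin] _].
  by rewrite fineK // hfin // subrr nrm0.
have [fxs [gxs [hfxs hgxs]]] : exists fx gx, f xs = fx%:E /\ g xs = gx%:E.
  case: hz0 => z hz; have := le_lt_trans (hmin z) hz.
  move=> hlt.
  case Ef: (f xs) hlt => [fx| |] hlt; last by move: (hpfn xs); rewrite Ef.
  - case Eg: (g xs) hlt => [gx| |] hlt; last by move: (hpgn xs); rewrite Eg.
    + by exists fx, gx.
    + by case: (@oo_ltr _ fx%:E isT hlt).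
  - by case: (@oo_ltl _ _ (hpgn xs) hlt).
have hxsO : Omega xs by apply: hdom; rewrite /dom /= hfxs ltry.
have hlow : forall k w fw gw, f w = fw%:E -> g w = gw%:E ->
  fine (f (y k.+1)) + fine (g (y k.+1)) - eps k.+1 + ip (v k.+1) (w - y k.+1)
    + mu / 2 * nrm (w - y k.+1) ^+ 2 <= fw + gw.
  move=> k w fw gw hfw hgw.
  case: (halg k) => _ [_ [[_ [hsub _]] [_ [hv _]]]].
  have h1 := hsub w.
  rewrite (hfy k) hfw efin3 lee_fin in h1.
  have [hgyk hgrk] := hgy k.
  have h2 := @grad_ineq _ _ _ _ _ _ _ (ltW hmu) hpgn hsc hgrk hgyk w.
  rewrite hgyk hgw -EFinD lee_fin in h2.
  rewrite hv ipDl.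
  by move: h1 h2; clear; lra.
have herrs : forall k, nrm (lam *: v k.+1 + y k.+1 - xt k) ^+ 2 / (1 + lam * mu)
    + 2 * lam * eps k.+1 <= sig ^+ 2 * nrm (y k.+1 - xt k) ^+ 2.
  move=> k; case: (halg k) => _ [_ [[heps [_ herr]] [_ [hv _]]]].
  have [hPO _] := hproj (xt k).
  have hlip' : nrm (G (y k.+1) - G (P (xt k))) <= L * nrm (y k.+1 - xt k).
    apply: (le_trans (hlip _ _ (hyO k) hPO)).
    apply: ler_wpM2l; first exact: ltW.
    exact: (@proj_nonexp _ _ _ _ _ _ hOcv (hproj _) (hyO k)).
  rewrite hv.
  exact: (@err_comb _ _ _ _ _ _ _ _ _ _ _ _ _ hlam0 hmu hsh (ltW hsu0) heps hlL hlip' herr).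
pose Phi := fun j => A j * (fine (f (y j)) + fine (g (y j)) - (fxs + gxs))
   + (1 + mu * A j) / 2 * nrm (xs - x j) ^+ 2.
have hsig0 : 0 <= sig by rewrite /sig; pos0.
have hsig1 : sig < 1 by rewrite /sig; move: hsig; clear; lra.
have hstep : forall k, Phi k.+1 <=
    A k * (fine (f (y k.+1)) + fine (g (y k.+1)) - eps k.+1 + ip (v k.+1) (y k - y k.+1)
      + mu / 2 * nrm (y k - y k.+1) ^+ 2 - (fxs + gxs))
    + (1 + mu * A k) / 2 * nrm (xs - x k) ^+ 2.
  move=> k; have [hAk [hak hlk]] := hA k.
  case: (halg k) => _ [hxt [_ [hAs [_ hx]]]].
  set al := (a k.+1 - mu * A k * lam) / (A k + a k.+1).
  have hAa : 0 < A k + a k.+1 by rewrite ltr_wpDl.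
  have hbe : (A k + mu * A k * lam) / (A k + a k.+1) = 1 - al.
    by rewrite /al; field; rewrite gt_eqF.
  have ET : al *: (x k - y k.+1) + (1 - al) *: (y k - y k.+1) = xt k - y k.+1.
    by rewrite hxt hbe vec_comb.
  have SC := @step_core _ _ (A k) (a k.+1) lam mu (sig ^+ 2) (eps k.+1)
     (fine (f (y k.+1)) + fine (g (y k.+1))) (x k - y k.+1) (y k - y k.+1) (v k.+1)
     (xs - y k.+1) hAk hak hmu hlk.
  rewrite -/al hbe ET in SC.
  have pre : ip (lam *: v k.+1 - (xt k - y k.+1)) (lam *: v k.+1 - (xt k - y k.+1)) / (1 + lam * mu)
     + 2 * lam * eps k.+1 <= sig ^+ 2 * ip (xt k - y k.+1) (xt k - y k.+1).
    have e1 : lam *: v k.+1 - (xt k - y k.+1) = lam *: v k.+1 + y k.+1 - xt k.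
      by apply/rowP => i; rewrite !mxE; ring.
    by rewrite e1 -!nrm2 (nrmB (xt k)); exact: herrs.
  have {SC pre} SC := SC pre.
  have eW : xs - y k.+1 - (((1 + mu * A k) / (1 + mu * (A k + a k.+1))) *: (x k - y k.+1)
      - (a k.+1 / (1 + mu * (A k + a k.+1))) *: v k.+1) = xs - x k.+1.
    have hs' : 0 < 1 + mu * (A k + a k.+1) by apply: gt1D; pos0.
    rewrite hx hAs; apply/rowP => i; rewrite !mxE.
    by field; rewrite gt_eqF.
  have eP : xs - y k.+1 - (x k - y k.+1) = xs - x k by apply/rowP => i; rewrite !mxE; ring.
  rewrite eW eP in SC.
  have hlw := hlow k xs fxs gxs hfxs hgxs.
  rewrite nrm2 in hlw.
  have hT : 0 <= (1 - sig ^+ 2) * (A k + a k.+1) / (2 * lam) * ip (xt k - y k.+1) (xt k - y k.+1).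
    have : 0 <= 1 - sig ^+ 2 by rewrite subr_ge0 expr_le1 // ltW.
    by move=> h; pos0.
  have hal := ler_wpM2l (ltW hak) hlw.
  rewrite /Phi hAs !nrm2.
  by move: SC hal hT; clear; lra.
have hPhi : forall k, Phi k.+1 <= d0 ^+ 2 / 2.
  elim=> [|k IH].
    apply: le_trans (hstep 0%N) _.
    by rewrite hA0 !(mul0r, mulr0, add0r, addr0) /d0; clear; lra.
  apply: le_trans (hstep k.+1) _; apply: le_trans IH.
  have hl := hlow k.+1 (y k.+1) _ _ (hfy k) (hgy k).1.
  rewrite /Phi lerD2r; apply: ler_wpM2l; first exact: (hA k.+1).1.
  by move: hl; clear; lra.
have hdist : forall j, nrm (xs - y j.+1) ^+ 2 <= L / (sigu * mu) * d0 ^+ 2 * rho ^+ j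
    /\ nrm (xs - x j.+1) ^+ 2 <= L / (sigu * mu) * d0 ^+ 2 * rho ^+ j
    /\ fine (f (y j.+1)) + fine (g (y j.+1)) - (fxs + gxs) <= L * d0 ^+ 2 / (2 * sigu) * rho ^+ j.
  move=> j.
  have hP := hPhi j; rewrite /Phi in hP.
  have hAj1 := (hA j.+1).1.
  have qg := @qgrowth _ _ _ _ _ _ _ _ _ _ _ (ltW hmu) hpfn hpgn hcf hsc (hfy j) (hgy j).1 hfxs hgxs hmin.
  rewrite nrmB in qg.
  set D := fine (f (y j.+1)) + fine (g (y j.+1)) - (fxs + gxs) in qg hP *.
  set Ny := nrm (xs - y j.+1) ^+ 2 in qg *.
  set Nx := nrm (xs - x j.+1) ^+ 2 in hP *.
  have hNy : 0 <= Ny by pos0.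
  have hNx : 0 <= Nx by pos0.
  have hD0 : 0 <= D by apply: le_trans qg; pos0.
  have hlo := hAlow j.
  have hq : 0 <= rho ^+ j by apply: exprn_ge0; exact: ltW.
  have hAD : 0 <= A j.+1 * D by pos0.
  have h1 : A j.+1 * (mu / 2 * Ny) <= A j.+1 * D by apply: ler_wpM2l.
  have h2 : 0 <= (1 + mu * A j.+1) / 2 * Nx by pos0.
  split.
    apply: dist_bound => //.
    by move: hP h1 h2 hAD; clear; lra.
  split.
    apply: dist_bound => //.
    by move: hP h1 h2 hAD hNx; clear; lra.
  have h3 : sigu / L * D <= rho ^+ j * A j.+1 * D by apply: ler_wpM2r.
  have h4 : rho ^+ j * (A j.+1 * D) <= rho ^+ j * (d0 ^+ 2 / 2).
    apply: ler_wpM2l => //; by move: hP h2; clear; lra.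
  have hsL : 0 < sigu / L by rewrite divr_gt0.
  rewrite -(ler_pM2l hsL).
  have -> : sigu / L * (L * d0 ^+ 2 / (2 * sigu) * rho ^+ j) = rho ^+ j * (d0 ^+ 2 / 2).
    by field; rewrite !gt_eqF.
  by move: h3 h4; clear; rewrite mulrA; lra.
split.
  case=> [//|j] _ /=.
  have [hy [hx hD]] := hdist j.
  split.
    by rewrite (hfy j) (hgy j).1 hfxs hgxs efin4 lee_fin.
  rewrite powhalf; last exact: ltW.
  rewrite -sqrt3; [|pos0|pos0|pos0].
  by rewrite ge_max; apply/andP; split; apply: sqrt_le => //; exact: nrm_ge0.
case=> [//|j] _ /=.
case: (halg j.+1) => _ [hxt [[heps [hsub _]] [_ [hv _]]]].
split; first by exists (u j.+2).
have hq : 0 <= rho ^+ j by apply: exprn_ge0; exact: ltW.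
set E := L / (sigu * mu) * d0 ^+ 2 * rho ^+ j.
have hE0 : 0 <= E by rewrite /E; pos0.
have [hy [hx _]] := hdist j.
have [hy2 _] := hdist j.+1.
have hEm : L / (sigu * mu) * d0 ^+ 2 * rho ^+ j.+1 <= E.
  rewrite /E; apply: ler_wpM2l; first by pos0.
  by rewrite exprS ler_piMl // ltW.
set DE := Num.sqrt E.
have hDE : 0 <= DE by pos0.
have hnY2 : nrm (xs - y j.+2) <= DE by apply: sqrt_le; [pos0 | exact: le_trans hy2 hEm].
have hnY : nrm (xs - y j.+1) <= DE by apply: sqrt_le; [pos0 | exact: hy].
have hnX : nrm (xs - x j.+1) <= DE by apply: sqrt_le; [pos0 | exact: hx].
have [hAk [hak hlk]] := hA j.+1.
set al := (a j.+2 - mu * A j.+1 * lam) / (A j.+1 + a j.+2).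
have hAa : 0 < A j.+1 + a j.+2 by rewrite ltr_wpDl.
have hbe : (A j.+1 + mu * A j.+1 * lam) / (A j.+1 + a j.+2) = 1 - al.
  by rewrite /al; field; rewrite gt_eqF.
have hal1 : 0 <= 1 - al by rewrite -hbe; pos0.
have hal0 : 0 <= al.
  rewrite /al; apply: divr_ge0; last exact: ltW.
  set D' := (1 + mu * A j.+1) * (A j.+1 + a j.+2) + mu * A j.+1 * a j.+2 in hlk.
  have hD' : 0 < D'.
    rewrite /D' ltr_wpDr; [|pos0|]; first by [].
    by rewrite mulr_gt0 // gt1D //; pos0.
  have hlD : lam * D' = a j.+2 ^+ 2 by rewrite hlk mulfVK ?gt_eqF.
  have e : a j.+2 * (a j.+2 - mu * A j.+1 * lam) = lam * ((1 + mu * A j.+1) * (A j.+1 + a j.+2)).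
    by rewrite mulrBr -expr2 -hlD /D'; ring.
  have : 0 <= a j.+2 * (a j.+2 - mu * A j.+1 * lam) by rewrite e; pos0.
  by rewrite pmulr_rge0.
have hT : nrm (y j.+2 - xt j.+1) <= 2 * DE.
  have eT : y j.+2 - xt j.+1 = - (xs - y j.+2) + (al *: (xs - x j.+1) + (1 - al) *: (xs - y j.+1)).
    by rewrite hxt hbe -/al; apply/rowP => i; rewrite !mxE; ring.
  rewrite eT; apply: (le_trans (nrmD _ _)); rewrite nrmN.
  apply: (le_trans (lerD (lexx _) (nrmD _ _))).
  rewrite !nrmZ (ger0_norm hal0) (ger0_norm hal1).
  have := ler_wpM2l hal0 hnX; have := ler_wpM2l hal1 hnY.
  by move: hnY2; clear; lra.
set r := nrm (y j.+2 - xt j.+1) in hT *.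
have hr0 : 0 <= r by pos0.
have hr2 : r ^+ 2 <= 4 * E.
  have -> : 4 * E = (2 * DE) ^+ 2 by rewrite exprMn sqr_sqrtr //; ring.
  by rewrite sqr_le //; pos0.
have herr := herrs j.+1; rewrite -/r in herr.
set p := nrm (lam *: v j.+2 + y j.+2 - xt j.+1) in herr.
have hp0 : 0 <= p by pos0.
have hs2r : sig ^+ 2 * r ^+ 2 <= sig ^+ 2 * (4 * E) by apply: ler_wpM2l; pos0.
have hp2 : 0 <= p ^+ 2 / (1 + lam * mu) by pos0.
have hle : 0 <= lam * eps j.+2 by pos0.
split; last first.
  have -> : 3 * sig ^+ 2 * d0 ^+ 2 * L ^+ 2 / (sigu ^+ 2 * mu) * rho ^+ j
      = 3 * sig ^+ 2 * E * L / sigu.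
    by rewrite /E; field; rewrite !gt_eqF.
  rewrite ler_pdivlMr //.
  have h1 : eps j.+2 * sigu <= eps j.+2 * (lam * L) by apply: ler_wpM2l.
  have h2 : lam * eps j.+2 <= 2 * sig ^+ 2 * E by move: herr hs2r hp2; clear; lra.
  have h3 : L * (lam * eps j.+2) <= L * (2 * sig ^+ 2 * E) by apply: ler_wpM2l => //; exact: ltW.
  have h4 : 0 <= sig ^+ 2 * E * L by pos0.
  by move: h1 h3 h4; clear; lra.
set c := Num.sqrt (1 + lam * mu).
have hlm : 0 < 1 + lam * mu by apply: gt1D; pos0.
have hcc0 : 0 < c by rewrite sqrtr_gt0.
have hc2 : c ^+ 2 = 1 + lam * mu by rewrite sqr_sqrtr // ltW.
have hpc : p <= c * sig * r.
  rewrite -sqr_le; [|pos0|pos0].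
  have h : p ^+ 2 / c ^+ 2 <= sig ^+ 2 * r ^+ 2 by rewrite hc2; move: herr hle; clear; lra.
  move: h; rewrite ler_pdivrMr ?exprn_gt0 //.
  by rewrite !exprMn; move=> h; apply: (le_trans h); rewrite mulrC mulrA.
have hlv : lam * nrm (v j.+2) <= p + r.
  have e : lam *: v j.+2 = (lam *: v j.+2 + y j.+2 - xt j.+1) + (xt j.+1 - y j.+2).
    by apply/rowP => i; rewrite !mxE; ring.
  rewrite -(ger0_norm (ltW hlam0)) -nrmZ e.
  by apply: (le_trans (nrmD _ _)); rewrite (nrmB (xt j.+1)).
set c' := Num.sqrt (1 + sigu * mu / L).
have hc'0 : 0 <= c' by pos0.
have hcc : c <= 3 * c'.
  rewrite -sqr_le; [|pos0|pos0].
  rewrite hc2 exprMn sqr_sqrtr; last by pos0.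
  have h1 : lam * mu * L <= 2 * sigu * mu.
    have -> : lam * mu * L = mu * (lam * L) by ring.
    have -> : 2 * sigu * mu = mu * (2 * sigu) by ring.
    by apply: ler_wpM2l => //; exact: ltW.
  have h2 : lam * mu <= 2 * (sigu * mu / L).
    by rewrite mulrA ler_pdivlMr // mulrA.
  have h3 : 0 <= sigu * mu / L by pos0.
  by move: h2 h3; clear; lra.
have hv1 : sigu * nrm (v j.+2) <= L * ((1 + c * sig) * (2 * DE)).
  have h1 : sigu * nrm (v j.+2) <= lam * L * nrm (v j.+2) by apply: ler_wpM2r; pos0.
  apply: (le_trans h1).
  have -> : lam * L * nrm (v j.+2) = L * (lam * nrm (v j.+2)) by ring.
  apply: ler_wpM2l; first exact: ltW.
  apply: (le_trans hlv).
  have : c * sig * r <= c * sig * (2 * DE) by apply: ler_wpM2l; pos0.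
  by move: hpc hT; clear; lra.
have hv2 : L * ((1 + c * sig) * (2 * DE)) <= 6 * (1 + sig * c') * L * DE / sigu * sigu.
  rewrite mulfVK ?gt_eqF //.
  have h1 : c * sig <= 3 * c' * sig by apply: ler_wpM2r.
  have h2 : 0 <= c' * sig by pos0.
  have : (1 + c * sig) * 2 <= 6 * (1 + sig * c') by move: h1 h2; clear; lra.
  have hLD : 0 <= L * DE by pos0.
  by move=> h; move: (ler_wpM2r hLD h); clear; lra.
have eL : L `^ (3 / 2) = L * Num.sqrt L.
  by rewrite powhalf ?sqrt_cube //; exact: ltW.
have es : sigu `^ (3 / 2) = sigu * Num.sqrt sigu.
  by rewrite powhalf ?sqrt_cube //; exact: ltW.
have em : mu `^ (1 / 2) = Num.sqrt mu.
  by rewrite -[(1 / 2 : R)]/(1%:R / 2) powhalf ?expr1 //; exact: ltW.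
have hsq0 : 0 < Num.sqrt sigu by rewrite sqrtr_gt0.
have hmq0 : 0 < Num.sqrt mu by rewrite sqrtr_gt0.
have eDE : DE = Num.sqrt L / (Num.sqrt sigu * Num.sqrt mu) * d0 * Num.sqrt (rho ^+ j).
  rewrite /DE /E sqrt3; [|pos0|pos0|pos0].
  rewrite sqrtrM; last exact: ltW.
  rewrite sqrtrV; last by pos0.
  by rewrite sqrtrM //; exact: ltW.
rewrite eL es em powhalf; last exact: ltW.
have -> : 6 * d0 * (L * Num.sqrt L) / (Num.sqrt mu * (sigu * Num.sqrt sigu)) * (1 + sig * c')
    * Num.sqrt (rho ^+ j) = 6 * (1 + sig * c') * L * DE / sigu.
  by rewrite eDE; field; rewrite ?(gt_eqF hsq0) ?(gt_eqF hmq0) ?(gt_eqF hsu0).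
rewrite ler_pdivlMr // [nrm _ * _]mulrC.
by have := le_trans hv1 hv2; rewrite mulfVK ?gt_eqF.
Qed.
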